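(* Let $P$ be a 6-stack. Then $P$ has a proper retract which (with the induced order) is isomorphic to a tower of sections if and only if $r(P)$ is a multiple of $3$. Consequently, $P$ is minimal automorphic if and only if $r(P)$ is not a multiple of $3$.
   Context: All posets are finite. For a poset $P$ and $p\in P$, the rank $r(p)$ of $p$ is the largest $m$ such that there is a chain $p_0<\dots<p_m=p$ in $P$. $P$ is ranked of rank $r(P)$ if every maximal chain has exactly $r(P)+1$ elements. For $0\le i\le j$, $P(i,j)=\{p\in P:i\le r(p)\le j\}$ (induced order). A subset $Q\subseteq P$ (induced order) is a retract of $P$ if there is an order-preserving $f:P\to Q$ with $f(q)=q$ for all $q\in Q$; it is proper if $Q\neq P$. The 6-crown $C_6$ is the poset on $\{x_0,x_1,x_2,y_0,y_1,y_2\}$ whose only strict comparabilities are $x_0<y_0>x_1<y_1>x_2<y_2>x_0$. A 6-stack is a ranked poset $P$ of rank $n\ge1$ such that $P(i,i+1)\cong C_6$ for each $0\le i<n$. The ordinal sum of posets $P_1,\dots,P_k$ ($k\ge1$) is their disjoint union ordered by the orders of the $P_i$ together with $p<q$ whenever $p\in P_i,q\in P_j,i<j$. A section is either a two-element antichain or a poset on the set $\{[i,k]: 0\le i\le 2,\ 0\le k\le n\}$ (with $3(n+1)$ distinct elements), for some $n\ge 1$, such that: (1) $[i,k]<[i,l]$ whenever $0\le k<l\le n$; (2) for each $k$, $\{[0,k],[1,k],[2,k]\}$ is an antichain; (3) $[i,k]<[j,l]$ implies $[i+1,k]<[j+1,l]$ (first indices mod $3$); (4) for each $0\le k<n$ there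 are $i,j$ with $[i,k]\not<[j,k+1]$. A tower of sections is an ordinal sum of one or more sections. A poset is automorphic if it has an automorphism with no fixed point; it is minimal automorphic if it is automorphic and no proper retract of it is automorphic. *)

(* Defs.v *)
(* Finite posets are represented by a finType T together with
   a strict order relation lt : rel T (irreflexive, transitive). *)
From mathcomp Require Import all_boot.
Set Implicit Arguments. Unset Strict Implicit. Unset Printing Implicit Defensive.

Section PosetDefs.
Variable T : finType.
Variable lt : rel T.

Definition is_spo : Prop :=
  (forall x, ~~ lt x x) /\ (forall x y z, lt x y -> lt y z -> lt x z).

Definition leP (x y : T) : bool := (x == y) || lt x y.

Definition chainb (p : T) (m : nat) : bool :=
  [exists t : (m.+1).-tuple T, sorted lt t && (last p t == p)].

(* r(p) = the largest such m (chains in a finite strict order have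
   at most #|T| elements, so m ranges below #|T|.+1) *)
Definition rank (p : T) : nat := \max_(m < #|T|.+1 | chainb p m) m.

Definition is_chain (C : {set T}) : Prop :=
  {in C &, forall x y, leP x y || leP y x}.
Definition is_maxchain (C : {set T}) : Prop :=
  is_chain C /\ forall D : {set T}, is_chain D -> C \subset D -> D = C.

Definition ranked (n : nat) : Prop :=
  forall C : {set T}, is_maxchain C -> #|C| = n.+1.

Definition rank_slice (i j : nat) : {set T} :=
  [set p | (i <= rank p) && (rank p <= j)].

Definition is_retract (Q : {set T}) : Prop :=
  exists f : T -> T,
    (forall x y, leP x y -> leP (f x) (f y)) /\
    (forall x, f x \in Q) /\ {in Q, forall q, f q = q}.

Definition automorphic_on (A : {set T}) : Prop :=
  exists f : T -> T,
    {in A, forall x, f x \in A} /\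
    {in A &, injective f} /\
    {in A, forall y, exists2 x, x \in A & f x = y} /\
    {in A &, forall x y, lt x y = lt (f x) (f y)} /\
    {in A, forall x, f x != x}.

Definition automorphic : Prop := automorphic_on [set: T].

Definition minimal_automorphic : Prop :=
  automorphic /\
  forall Q : {set T}, Q != [set: T] -> is_retract Q -> ~ automorphic_on Q.

End PosetDefs.

Definition iso_on (T S : finType) (lt : rel T) (A : {set T}) (ltS : rel S) : Prop :=
  exists f : T -> S,
    {in A &, injective f} /\
    (forall s, exists2 x, x \in A & f x = s) /\
    {in A &, forall x y, lt x y = ltS (f x) (f y)}.

(* The 6-crown on 'I_3 * bool: (i,false) = x_i, (i,true) = y_i;
   x_j < y_i iff j = i or j = i+1 (mod 3). *)
Definition c6_lt (a b : 'I_3 * bool) : bool :=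
  ~~ a.2 && b.2 && ((a.1 == b.1) || (val a.1 == (val b.1).+1 %% 3)).

Definition six_stack (T : finType) (lt : rel T) (n : nat) : Prop :=
  ranked lt n /\ 1 <= n /\
  forall i, i < n -> iso_on lt (rank_slice lt i i.+1) c6_lt.

(* sections: either a two-element antichain, or a poset on
   {[i,k] : 0<=i<=2, 0<=k<=n} (labelled bijectively by g) with (1)-(4) *)
Definition is_section (S : finType) (lt : rel S) : Prop :=
  is_spo lt /\
  ((#|S| = 2 /\ forall x y, ~~ lt x y) \/
   exists n, 1 <= n /\
   exists g : 'I_3 * 'I_n.+1 -> S,
     bijective g /\
     (forall (i : 'I_3) (k l : 'I_n.+1), k < l -> lt (g (i, k)) (g (i, l))) /\
     (forall (k : 'I_n.+1) (i j : 'I_3), ~~ lt (g (i, k)) (g (j, k))) /\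
     (forall (i j : 'I_3) (k l : 'I_n.+1),
        lt (g (i, k)) (g (j, l)) -> lt (g (ordS i, k)) (g (ordS j, l))) /\
     (forall k : 'I_n, exists i j : 'I_3,
        ~~ lt (g (i, widen_ord (leqnSn n) k)) (g (j, lift ord0 k)))).

Definition ordsum_lt (k : nat) (S : 'I_k -> finType) (lts : forall i, rel (S i))
    (a b : {i : 'I_k & S i}) : bool :=
  (tag a < tag b) || ((tag b == tag a) && lts (tag a) (tagged a) (tagged_as a b)).

Definition iso_tower_of_sections (T : finType) (lt : rel T) (A : {set T}) : Prop :=
  exists k : nat, 1 <= k /\
  exists (S : 'I_k -> finType) (lts : forall i, rel (S i)),
    (forall i, is_section (lts i)) /\ iso_on lt A (ordsum_lt lts).

(* Main.v *)
Require Import Defs.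
From mathcomp Require Import all_boot zify.
From Stdlib Require Import IndefiniteDescription.
Set Implicit Arguments. Unset Strict Implicit. Unset Printing Implicit Defensive.

Section Rank.
Variable T : finType.
Variable lt : rel T.
Hypothesis Hirr : forall x, ~~ lt x x.
Hypothesis Htr : forall x y z, lt x y -> lt y z -> lt x z.

Lemma ltT : transitive lt.
Proof. by move=> y x z; apply: Htr. Qed.

Lemma chainbP p m :
  reflect (exists s : seq T, size s = m /\ sorted lt (rcons s p)) (chainb lt p m).
Proof.
apply: (iffP existsP) => [[t /andP[st /eqP lt_]]|[s [sz ss]]].
  move: (size_tuple t) st lt_; case/lastP: (tval t) => [|s z] //=.
  rewrite last_rcons size_rcons => -[sz] ss e; subst z. by exists s.
have szt : size (rcons s p) == m.+1 by rewrite size_rcons sz.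
by exists (Tuple szt); rewrite /= ss last_rcons eqxx.
Qed.

Lemma chain_size (s : seq T) : sorted lt s -> size s <= #|T|.
Proof.
move=> ss; have u : uniq s by apply: (sorted_uniq ltT) => // x; exact: negbTE (Hirr x).
by move/card_uniqP: u <-; apply: max_card.
Qed.

Lemma rank_ge p m : chainb lt p m -> m <= rank lt p.
Proof.
move=> c; have hm : m < #|T|.+1.
  case/chainbP: c => s [sz ss]; have := chain_size ss; rewrite size_rcons sz; lia.
exact: (@leq_bigmax_cond _ (fun i : 'I_#|T|.+1 => chainb lt p i) (fun i => nat_of_ord i) (Ordinal hm)).
Qed.

Lemma rank_chain p : chainb lt p (rank lt p).
Proof.
have h0 : 0 < #|(fun i : 'I_#|T|.+1 => chainb lt p i)|.
  apply/card_gt0P; exists ord0; rewrite /in_mem /=; apply/chainbP; by exists [::].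
case: (eq_bigmax_cond (fun i : 'I_#|T|.+1 => nat_of_ord i) h0) => i0 Hi0 e.
rewrite /rank. rewrite e. exact Hi0.
Qed.

Lemma rankP p : exists s : seq T, size s = rank lt p /\ sorted lt (rcons s p).
Proof. exact/chainbP/rank_chain. Qed.

Lemma rank_lt x y : lt x y -> rank lt x < rank lt y.
Proof.
move=> xy; case: (rankP x) => s [sz ss]; apply: rank_ge; apply/chainbP.
exists (rcons s x); split; first by rewrite size_rcons sz.
case: s ss {sz} => [|a s] /=; first by rewrite xy.
by rewrite !rcons_path => -> /=; rewrite last_rcons xy.
Qed.

Lemma rank_pred y : 0 < rank lt y -> exists z, lt z y /\ rank lt z = (rank lt y).-1.
Proof.
case: (rankP y) => s [sz ss] r0.
case/lastP: s sz ss => [|s z] /=; first by move=> e; rewrite -e in r0.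
rewrite size_rcons => sz ss.
have zy : lt z y.
  case: s ss {sz} => [|a s] /=; first by rewrite andbT.
  by rewrite rcons_path => /andP[_]; rewrite last_rcons.
exists z; split => //.
have h1 := rank_lt zy.
apply/eqP; rewrite eqn_leq; apply/andP; split; first by lia.
rewrite -sz /=; apply: rank_ge; apply/chainbP; exists s; split => //.
case: s ss {sz} => [|a s] //= ; rewrite rcons_path => /andP[] //.
Qed.

End Rank.

Section RankBound.
Variable T : finType.
Variable lt : rel T.
Hypothesis Hirr : forall x, ~~ lt x x.
Hypothesis Htr : forall x y z, lt x y -> lt y z -> lt x z.

Lemma pairwise_cmp (l : seq T) y z : pairwise lt l -> y \in l -> z \in l ->
  Defs.leP lt y z || Defs.leP lt z y.
Proof.
elim: l => [|a l IH] //= /andP[/allP ha hl]; rewrite !inE.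
case/orP=> [/eqP->|yl]; case/orP=> [/eqP->|zl].
- by rewrite /Defs.leP eqxx.
- by rewrite /Defs.leP (ha z zl) orbT.
- by rewrite /Defs.leP (ha y yl) !orbT.
- exact: IH.
Qed.

Definition chainbool (D : {set T}) :=
  [forall y in D, forall z in D, Defs.leP lt y z || Defs.leP lt z y].

Lemma chainboolP D : reflect (is_chain lt D) (chainbool D).
Proof.
apply: (iffP forall_inP) => [H y z yD zD|H y yD].
  by move/forall_inP: (H y yD); apply.
by apply/forall_inP => z zD; apply: H.
Qed.

Lemma rank_le_n n : ranked lt n -> forall x, rank lt x <= n.
Proof.
move=> Hr x; case: (rankP lt x) => s [sz ss].
set l := rcons s x.
have pl : pairwise lt l by rewrite -sorted_pairwise //; exact: ltT.
have ul : uniq l by apply: (sorted_uniq (ltT Htr)) => // y; exact: negbTE (Hirr y).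
pose C := [set z in l].
have cC : chainbool C.
  by apply/chainboolP => y z; rewrite !inE; apply: pairwise_cmp.
have PC : chainbool C && (C \subset C) by rewrite cC subxx.
case: (@arg_maxnP _ C (fun D => chainbool D && (C \subset D)) (fun D => #|D|) PC).
move=> D /andP[cD sCD] Dmax.
have mD : is_maxchain lt D.
  split; first exact/chainboolP.
  move=> D' /chainboolP cD' sDD'; apply/eqP; rewrite eq_sym eqEcard sDD' /=.
  by apply: Dmax; rewrite cD' (subset_trans sCD sDD').
have := Hr D mD; have := subset_leq_card sCD.
rewrite cardsE; move/card_uniqP: ul => ->; rewrite /l size_rcons sz; lia.
Qed.

End RankBound.

Lemma c6_bot_top a b : c6_lt a b -> a.2 = false /\ b.2 = true.
Proof. by case: a b => [? [] ] [? [] ]. Qed.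

Lemma c6_below_self j : c6_lt (j, false) (j, true).
Proof. by rewrite /c6_lt /= eqxx. Qed.

Lemma c6_nb_uniq (j c : 'I_3) : ~~ c6_lt (c, false) (j, true) -> c = ordS (ordS j).
Proof.
move=> h; apply/val_inj; move: h.
by case: j => [[|[|[|]]] ?] //; case: c => [[|[|[|]]] ?].
Qed.

Lemma c6_nb (j : 'I_3) : ~~ c6_lt (ordS (ordS j), false) (j, true).
Proof. by case: j => [[|[|[|]]] ?]. Qed.

Lemma ordS3 (c : 'I_3) : ordS (ordS (ordS c)) = c.
Proof. by apply/val_inj; case: c => [[|[|[|]]] ?]. Qed.

Lemma ordS_neq (c : 'I_3) : ordS c != c.
Proof. by case: c => [[|[|[|]]] ?]. Qed.

Lemma third (a b : 'I_3) : exists c : 'I_3, (c != a) && (c != b).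
Proof.
case: a => [[|[|[|]]] ?] //; case: b => [[|[|[|]]] ?] //;
  by [exists (@Ordinal 3 0 isT) | exists (@Ordinal 3 1 isT) | exists (@Ordinal 3 2 isT)].
Qed.

Lemma pair_eta (p : 'I_3 * bool) b : p.2 = b -> p = (p.1, b).
Proof. by case: p => ? ? /= ->. Qed.

Section Slice.
Set Default Proof Using "All".
Variable T : finType.
Variable lt : rel T.
Hypothesis Hirr : forall x, ~~ lt x x.
Hypothesis Htr : forall x y z, lt x y -> lt y z -> lt x z.
Variable k : nat.
Variable f : T -> 'I_3 * bool.
Let S := rank_slice lt k k.+1.
Hypothesis Hfi : {in S &, injective f}.
Hypothesis Hfs : forall s, exists2 x, x \in S & f x = s.
Hypothesis Hfl : {in S &, forall x y, lt x y = c6_lt (f x) (f y)}.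

Local Notation rk := (rank lt).

Lemma inS x : (x \in S) = (k <= rk x) && (rk x <= k.+1).
Proof. by rewrite inE. Qed.

Lemma slice_lvl x : x \in S -> (f x).2 = (rk x == k.+1).
Proof.
move=> xS; have := xS; rewrite inS => /andP[h1 h2].
case: eqP => [e|ne].
  have r0 : 0 < rk x by rewrite e.
  case: (rank_pred Hirr Htr r0) => z [zx rz].
  have zS : z \in S by rewrite inS rz e /= leqnn leqnSn.
  by move: zx; rewrite Hfl // => /c6_bot_top [_ ->].
case e2 : (f x).2 => //.
case: (Hfs ((f x).1, false)) => z zS fz.
have : lt z x by rewrite Hfl // fz; case: (f x) e2 => ? b /= ->; exact: c6_below_self.
move/(rank_lt Hirr Htr); move: zS; rewrite inS => /andP[h3 _]; lia.
Qed.

Lemma slice_top y : rk y = k.+1 -> y \in S.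
Proof. by move=> e; rewrite inS e leqnn leqnSn. Qed.
Lemma slice_bot y : rk y = k -> y \in S.
Proof. by move=> e; rewrite inS e leqnn leqnSn. Qed.

Lemma crown_exists y : rk y = k.+1 -> exists x, rk x = k /\ ~~ lt x y.
Proof.
move=> ry; have yS := slice_top ry.
have fy : f y = ((f y).1, true) by apply: pair_eta; rewrite (slice_lvl yS) ry eqxx.
case: (Hfs (ordS (ordS (f y).1), false)) => x xS fx.
have rx : rk x = k.
  have := slice_lvl xS; rewrite fx /= => /esym/eqP ne.
  by move: xS; rewrite inS; lia.
by exists x; split => //; rewrite Hfl // fx fy c6_nb.
Qed.

Lemma fbot x : rk x = k -> f x = ((f x).1, false).
Proof.
move=> rx; have xS := slice_bot rx.
by apply: pair_eta; rewrite (slice_lvl xS) rx; apply/eqP; lia.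
Qed.

Lemma ftop x : rk x = k.+1 -> f x = ((f x).1, true).
Proof.
move=> rx; have xS := slice_top rx.
by apply: pair_eta; rewrite (slice_lvl xS) rx eqxx.
Qed.

Lemma crown_uniq y x x' : rk y = k.+1 -> rk x = k -> rk x' = k ->
  ~~ lt x y -> ~~ lt x' y -> x = x'.
Proof.
move=> ry rx rx'.
have yS := slice_top ry; have xS := slice_bot rx; have x'S := slice_bot rx'.
rewrite !Hfl //.
rewrite (ftop ry) (fbot rx) (fbot rx') => /c6_nb_uniq h1 /c6_nb_uniq h2.
apply: Hfi => //.
by rewrite (fbot rx) (fbot rx') h1 h2.
Qed.

Lemma crown_inj y y' x : rk y = k.+1 -> rk y' = k.+1 -> rk x = k ->
  ~~ lt x y -> ~~ lt x y' -> y = y'.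
Proof.
move=> ry ry' rx.
have yS := slice_top ry; have y'S := slice_top ry'; have xS := slice_bot rx.
rewrite !Hfl //.
rewrite (ftop ry) (ftop ry') (fbot rx) => /c6_nb_uniq h1 /c6_nb_uniq h2.
apply: Hfi => //.
rewrite (ftop ry) (ftop ry'); congr (_, _).
by rewrite -[(f y).1]ordS3 -[(f y').1]ordS3 -h1 -h2.
Qed.

Lemma crown_surj x : rk x = k -> exists y, rk y = k.+1 /\ ~~ lt x y.
Proof.
move=> rx; case: (Hfs (ordS (f x).1, true)) => y yS fy.
have ry : rk y = k.+1.
  by have := slice_lvl yS; rewrite fy /= => /esym/eqP.
have xS := slice_bot rx.
exists y; split => //; rewrite Hfl // (fbot rx) fy.
by rewrite -{1}[(f x).1]ordS3 c6_nb.
Qed.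

Lemma bot_label (a : 'I_3) : exists x, rk x = k /\ (f x).1 = a.
Proof.
case: (Hfs (a, false)) => x xS fx; exists x; split; last by rewrite fx.
have := slice_lvl xS; rewrite fx /= => /esym/eqP ne.
by move: xS; rewrite inS; lia.
Qed.

Lemma bot_inj x x' : rk x = k -> rk x' = k -> (f x).1 = (f x').1 -> x = x'.
Proof.
move=> rx rx' e; apply: Hfi; try apply: slice_bot => //.
by rewrite (fbot rx) (fbot rx') e.
Qed.

End Slice.

Definition ltM (p q : 'I_3 * nat) : bool :=
  (p.2.+2 <= q.2) || ((q.2 == p.2.+1) && (p.1 != q.1)).

Section Structure.
Set Default Proof Using "All".
Variable T : finType.
Variable lt : rel T.
Hypothesis Hirr : forall x, ~~ lt x x.
Hypothesis Htr : forall x y z, lt x y -> lt y z -> lt x z.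
Variable n : nat.
Hypothesis Hrk : forall x, rank lt x <= n.
Hypothesis Hsl : forall i, i < n -> iso_on lt (rank_slice lt i i.+1) c6_lt.
Variable f0 : T -> 'I_3 * bool.
Hypothesis Hf0i : {in rank_slice lt 0 1 &, injective f0}.
Hypothesis Hf0s : forall s, exists2 x, x \in rank_slice lt 0 1 & f0 x = s.
Hypothesis Hf0l : {in rank_slice lt 0 1 &, forall x y, lt x y = c6_lt (f0 x) (f0 y)}.

Local Notation rk := (rank lt).

Definition mu (y : T) : T := odflt y [pick z | (rk z == (rk y).-1) && ~~ lt z y].

Lemma mu_spec y : 0 < rk y -> rk (mu y) = (rk y).-1 /\ ~~ lt (mu y) y.
Proof.
move=> r0; have kn : (rk y).-1 < n by move: (Hrk y) => ?; lia.
have := Hsl kn; rewrite /iso_on => -[f [fi [fs fl]]].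
have ry : rk y = ((rk y).-1).+1 by lia.
case: (crown_exists Hirr Htr fi fs fl ry) => x [rx nx].
rewrite /mu; case: pickP => [z /andP[/eqP e nz] /=|/(_ x)]; first by rewrite e.
by rewrite rx eqxx nx.
Qed.

Lemma mu_uniq y z : 0 < rk y -> rk z = (rk y).-1 -> ~~ lt z y -> z = mu y.
Proof.
move=> r0 rz nz; have kn : (rk y).-1 < n by move: (Hrk y) => ?; lia.
have := Hsl kn; rewrite /iso_on => -[f [fi [fs fl]]].
have ry : rk y = ((rk y).-1).+1 by lia.
case: (mu_spec r0) => rm nm.
exact: (crown_uniq Hirr Htr fi fs fl ry rz rm nz nm).
Qed.

Lemma mu_inj y y' : rk y = rk y' -> 0 < rk y -> mu y = mu y' -> y = y'.
Proof.
move=> e r0 em; have kn : (rk y).-1 < n by move: (Hrk y) => ?; lia.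
have := Hsl kn; rewrite /iso_on => -[f [fi [fs fl]]].
have ry : rk y = ((rk y).-1).+1 by lia.
have ry' : rk y' = ((rk y).-1).+1 by lia.
case: (mu_spec r0) => rm nm.
have r0' : 0 < rk y' by lia.
case: (mu_spec r0') => rm' nm'.
apply: (crown_inj Hirr Htr fi fs fl ry ry' rm nm); by rewrite em.
Qed.

Lemma mu_surj x : rk x < n -> exists y, rk y = (rk x).+1 /\ mu y = x.
Proof.
move=> kn; have := Hsl kn; rewrite /iso_on => -[f [fi [fs fl]]].
case: (crown_surj Hirr Htr fi fs fl (erefl (rk x))) => y [ry ny].
exists y; split => //; apply/esym/mu_uniq; rewrite ?ry //.
Qed.

Definition col (x : T) : 'I_3 := (f0 (iter (rk x) mu x)).1.

Lemma col_mu y : 0 < rk y -> col y = col (mu y).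
Proof.
move=> r0; case: (mu_spec r0) => rm _; rewrite /col rm.
by case e: (rk y) r0 => [|k] //= _; rewrite -iterSr.
Qed.

Lemma col_inj x x' : rk x = rk x' -> col x = col x' -> x = x'.
Proof.
move=> e; move: {2}(rk x) (erefl (rk x)) => k rx.
elim: k x x' e rx => [|k IH] y y' e ry ec.
  have : (f0 y).1 = (f0 y').1 by move: ec; rewrite /col -e ry.
  by apply: (bot_inj Hirr Htr Hf0i Hf0s Hf0l) => //; rewrite -e.
have r0 : 0 < rk y by rewrite ry.
apply: (mu_inj e r0).
case: (mu_spec r0) => rm _; have r0' : 0 < rk y' by rewrite -e.
case: (mu_spec r0') => rm' _.
apply: IH; first by rewrite rm rm' e.
  by rewrite rm ry.
by rewrite -!col_mu.
Qed.

Lemma col_surj (a : 'I_3) k : k <= n -> exists x, rk x = k /\ col x = a.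
Proof.
elim: k => [|k IH] kn.
  case: (bot_label Hirr Htr Hf0i Hf0s Hf0l a) => x [rx fx]; exists x; split => //.
  by rewrite /col rx.
case: (IH (ltnW kn)) => x [rx cx].
case: (mu_surj (x := x)); first by rewrite rx.
move=> y [ry my]; exists y; split; first by rewrite ry rx.
by rewrite col_mu ?ry // my.
Qed.

Lemma lt_adj x y : rk y = (rk x).+1 -> lt x y = (col x != col y).
Proof.
move=> ry; have r0 : 0 < rk y by rewrite ry.
case: (mu_spec r0) => rm nm.
rewrite (col_mu r0).
case l: (lt x y).
  apply/esym/negP => /eqP e.
  have := col_inj (x := x) (x' := mu y); rewrite rm ry /= => /(_ erefl e) ex.
  by move: nm; rewrite -ex l.
suff -> : x = mu y by rewrite eqxx.
by apply: mu_uniq => //; rewrite ?ry ?l.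
Qed.

Lemma lt_far x y : (rk x).+2 <= rk y -> lt x y.
Proof.
move=> h; move: {2}(rk y - (rk x).+2) (erefl (rk y - (rk x).+2)) => d.
elim: d x y h => [|d IH] x y h e.
  have ry : rk y = (rk x).+2 by lia.
  case: (third (col x) (col y)) => c /andP[c1 c2].
  case: (col_surj c (k := (rk x).+1)); first by move: (Hrk y) => ?; lia.
  move=> z [rz cz].
  apply: (Htr (y := z)); first by rewrite lt_adj // cz eq_sym.
  by rewrite lt_adj ?rz ?ry // cz.
case: (third (col x) (col x)) => c /andP[c1 _].
case: (col_surj c (k := (rk x).+1)); first by move: (Hrk y) => ?; lia.
move=> z [rz cz].
apply: (Htr (y := z)); first by rewrite lt_adj // cz eq_sym.
apply: IH; rewrite rz; lia.
Qed.

Lemma lt_model x y : lt x y = ltM (col x, rk x) (col y, rk y).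
Proof.
rewrite /ltM /=.
case: (leqP (rk x).+2 (rk y)) => h; first by rewrite lt_far.
case: (eqVneq (rk y) (rk x).+1) => e.
  by rewrite /= lt_adj.
rewrite /=; apply/negbTE/negP => /(rank_lt Hirr Htr); lia.
Qed.

End Structure.

Definition ltN (a i b j : nat) : bool := (i.+2 <= j) || ((j == i.+1) && (a != b)).
Definition leN (a i b j : nat) : bool := ((a == b) && (i == j)) || ltN a i b j.
Definition imgc (c a : nat) : nat := if c < 3 then c else a.
Definition imgo (c : nat) : nat := if c < 3 then 1 else if c == 3 then 2 else 0.
Definition compat (s t : seq nat) : bool :=
  all (fun a => all (fun b => (a != b) ==>
     leN (imgc (nth 0 s a) a) (imgo (nth 0 s a)) (imgc (nth 0 t b) b) (imgo (nth 0 t b)).+1)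
     (iota 0 3)) (iota 0 3).
Definition valid (s : seq nat) : bool :=
  (size s == 3) && all (fun a => (nth 0 s a < 5) && (nth 0 s a != a)) (iota 0 3).
Definition noD (s : seq nat) : bool := all (fun a => nth 0 s a != 4) (iota 0 3).
Definition noU (s : seq nat) : bool := all (fun a => nth 0 s a != 3) (iota 0 3).
Definition allstates : seq (seq nat) :=
  [seq a :: bc | a <- iota 0 5, bc <- [seq [:: b; c] | b <- iota 0 5, c <- iota 0 5]].
Definition rotS (s : seq nat) : bool := (s == [:: 1; 2; 0]) || (s == [:: 2; 0; 1]).
Definition F0 : seq (seq nat) := [:: [:: 1; 0; 0]; [:: 1; 0; 1]; [:: 1; 0; 3]; [:: 1; 2; 0]; [:: 1; 2; 1]; [:: 1; 2; 3]; [:: 1; 3; 0]; [:: 1; 3; 1]; [:: 1; 3; 3]; [:: 2; 0; 0]; [:: 2; 0; 1]; [:: 2; 0; 3]; [:: 2; 2; 0]; [:: 2; 2; 1]; [:: 2; 2; 3]; [:: 2; 3; 0]; [:: 2; 3; 1]; [:: 2; 3; 3]; [:: 3; 0; 0]; [:: 3; 0; 1]; [:: 3; 0; 3]; [:: 3; 2; 0]; [:: 3; 2; 1]; [:: 3; 2; 3]; [:: 3; 3; 0]; [:: 3; 3; 1]; [:: 3; 3; 3]].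
Definition F1 : seq (seq nat) := [:: [:: 1; 2; 0]; [:: 1; 2; 3]; [:: 1; 3; 0]; [:: 1; 3; 1]; [:: 1; 3; 3]; [:: 1; 3; 4]; [:: 2; 0; 1]; [:: 2; 0; 3]; [:: 2; 2; 3]; [:: 2; 3; 1]; [:: 2; 3; 3]; [:: 2; 4; 3]; [:: 3; 0; 0]; [:: 3; 0; 1]; [:: 3; 0; 3]; [:: 3; 0; 4]; [:: 3; 2; 0]; [:: 3; 2; 3]; [:: 3; 3; 0]; [:: 3; 3; 1]; [:: 3; 3; 3]; [:: 3; 3; 4]; [:: 3; 4; 0]; [:: 3; 4; 3]; [:: 4; 2; 3]; [:: 4; 3; 1]; [:: 4; 3; 3]].
Definition F2 : seq (seq nat) := [:: [:: 1; 0; 3]; [:: 1; 2; 0]; [:: 1; 2; 3]; [:: 1; 3; 0]; [:: 1; 3; 3]; [:: 1; 4; 3]; [:: 2; 0; 1]; [:: 2; 0; 3]; [:: 2; 3; 0]; [:: 2; 3; 1]; [:: 2; 3; 3]; [:: 2; 3; 4]; [:: 3; 0; 1]; [:: 3; 0; 3]; [:: 3; 2; 0]; [:: 3; 2; 1]; [:: 3; 2; 3]; [:: 3; 2; 4]; [:: 3; 3; 0]; [:: 3; 3; 1]; [:: 3; 3; 3]; [:: 3; 3; 4]; [:: 3; 4; 1]; [:: 3; 4; 3]; [:: 4; 0; 3]; [:: 4; 3; 0]; [:: 4; 3; 3]].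
Definition B0 : seq (seq nat) := [:: [:: 1; 0; 0]; [:: 1; 0; 1]; [:: 1; 0; 4]; [:: 1; 2; 0]; [:: 1; 2; 1]; [:: 1; 2; 4]; [:: 1; 4; 0]; [:: 1; 4; 1]; [:: 1; 4; 4]; [:: 2; 0; 0]; [:: 2; 0; 1]; [:: 2; 0; 4]; [:: 2; 2; 0]; [:: 2; 2; 1]; [:: 2; 2; 4]; [:: 2; 4; 0]; [:: 2; 4; 1]; [:: 2; 4; 4]; [:: 4; 0; 0]; [:: 4; 0; 1]; [:: 4; 0; 4]; [:: 4; 2; 0]; [:: 4; 2; 1]; [:: 4; 2; 4]; [:: 4; 4; 0]; [:: 4; 4; 1]; [:: 4; 4; 4]].
Definition B1 : seq (seq nat) := [:: [:: 1; 2; 0]; [:: 1; 2; 4]; [:: 1; 4; 0]; [:: 1; 4; 1]; [:: 1; 4; 3]; [:: 1; 4; 4]; [:: 2; 0; 1]; [:: 2; 0; 4]; [:: 2; 2; 4]; [:: 2; 3; 4]; [:: 2; 4; 1]; [:: 2; 4; 4]; [:: 3; 2; 4]; [:: 3; 4; 1]; [:: 3; 4; 4]; [:: 4; 0; 0]; [:: 4; 0; 1]; [:: 4; 0; 3]; [:: 4; 0; 4]; [:: 4; 2; 0]; [:: 4; 2; 4]; [:: 4; 3; 0]; [:: 4; 3; 4]; [:: 4; 4; 0]; [:: 4; 4; 1]; [:: 4; 4; 3]; [:: 4; 4; 4]].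
Definition B2 : seq (seq nat) := [:: [:: 1; 0; 4]; [:: 1; 2; 0]; [:: 1; 2; 4]; [:: 1; 3; 4]; [:: 1; 4; 0]; [:: 1; 4; 4]; [:: 2; 0; 1]; [:: 2; 0; 4]; [:: 2; 4; 0]; [:: 2; 4; 1]; [:: 2; 4; 3]; [:: 2; 4; 4]; [:: 3; 0; 4]; [:: 3; 4; 0]; [:: 3; 4; 4]; [:: 4; 0; 1]; [:: 4; 0; 4]; [:: 4; 2; 0]; [:: 4; 2; 1]; [:: 4; 2; 3]; [:: 4; 2; 4]; [:: 4; 3; 1]; [:: 4; 3; 4]; [:: 4; 4; 0]; [:: 4; 4; 1]; [:: 4; 4; 3]; [:: 4; 4; 4]].
Definition Fl (i : nat) := nth [::] [:: F0; F1; F2] i.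
Definition Bl (i : nat) := nth [::] [:: B0; B1; B2] i.

Lemma valid_all s : valid s -> s \in allstates.
Proof.
case: s => [|a [|b [|c [|? ?]]]] //= /andP[_ /and4P[/andP[ha _] /andP[hb _] /andP[hc _] _]].
apply/allpairsPdep; exists a, [:: b; c]; split; first by rewrite mem_iota.
  apply/allpairsPdep; exists b, c; split => //; rewrite mem_iota //.
done.
Qed.

Definition fcheck i := all (fun s => all (fun t => valid t ==> compat s t ==> (t \in Fl (i.+1 %% 3))) allstates) (Fl i).
Definition bcheck i := all (fun t => all (fun s => valid s ==> compat s t ==> (s \in Bl (i.+1 %% 3))) allstates) (Bl i).

Lemma fcheck_ok : [&& fcheck 0, fcheck 1 & fcheck 2].
Proof. by vm_compute. Qed.
Lemma bcheck_ok : [&& bcheck 0, bcheck 1 & bcheck 2].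
Proof. by vm_compute. Qed.

Lemma fcheck_all i : i < 3 -> fcheck i.
Proof. by case/and3P: fcheck_ok; case: i => [|[|[|]]]. Qed.
Lemma bcheck_all i : i < 3 -> bcheck i.
Proof. by case/and3P: bcheck_ok; case: i => [|[|[|]]]. Qed.

Lemma F_step i s t : i < 3 -> s \in Fl i -> valid t -> compat s t -> t \in Fl (i.+1 %% 3).
Proof.
move=> i3 sF vt ct.
have := fcheck_all i3.
by move/allP/(_ s sF)/allP/(_ t (valid_all vt)); rewrite vt ct.
Qed.

Lemma B_step i s t : i < 3 -> t \in Bl i -> valid s -> compat s t -> s \in Bl (i.+1 %% 3).
Proof.
move=> i3 tB vs ct.
have := bcheck_all i3.
by move/allP/(_ t tB)/allP/(_ s (valid_all vs)); rewrite vs ct.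
Qed.

Lemma F0_init s : valid s -> noD s -> s \in Fl 0.
Proof.
move=> vs nd.
have H : all (fun s => valid s ==> noD s ==> (s \in Fl 0)) allstates by vm_compute.
by move/allP: H => /(_ s (valid_all vs)); rewrite vs nd.
Qed.

Lemma B0_init s : valid s -> noU s -> s \in Bl 0.
Proof.
move=> vs nd.
have H : all (fun s => valid s ==> noU s ==> (s \in Bl 0)) allstates by vm_compute.
by move/allP: H => /(_ s (valid_all vs)); rewrite vs nd.
Qed.

Definition rcheck := all (fun i => all (fun j => ((i + j) %% 3 != 0) ==>
   all (fun s => (s \in Bl j) ==> rotS s) (Fl i)) (iota 0 3)) (iota 0 3).
Lemma rcheck_ok : rcheck. Proof. by vm_compute. Qed.

Lemma FB_rot i j s : i < 3 -> j < 3 -> (i + j) %% 3 != 0 -> s \in Fl i -> s \in Bl j -> rotS s.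
Proof.
move=> i3 j3 nz sF sB; move/allP: rcheck_ok => /(_ i).
rewrite mem_iota i3 => /(_ isT) /allP /(_ j); rewrite mem_iota j3 nz => /(_ isT) /allP /(_ s sF).
by rewrite sB.
Qed.

Lemma rot_surj s : rotS s -> forall b, b < 3 -> exists2 a, a < 3 & nth 0 s a = b.
Proof.
case/orP => /eqP -> [|[|[|]]] //= _;
  by [exists 0 | exists 1 | exists 2].
Qed.

Lemma leN_shift a i b j p : leN a (i + p) b (j + p) = leN a i b j.
Proof.
rewrite /leN /ltN eqn_add2r -!addSn leq_add2r eqn_add2r //.
Qed.

Section Model.
Set Default Proof Using "All".
Variables (T : finType) (lt : rel T) (n : nat) (cl : T -> 'I_3) (rk : T -> nat).
Hypothesis Hb : forall x, rk x <= n.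
Hypothesis Hinj : forall x y, rk x = rk y -> cl x = cl y -> x = y.
Hypothesis Hsur : forall (a : 'I_3) k, k <= n -> exists x, rk x = k /\ cl x = a.
Hypothesis Hmod : forall x y, lt x y = ltM (cl x, rk x) (cl y, rk y).
Variable d : T.

Lemma HmodN x y : lt x y = ltN (cl x) (rk x) (cl y) (rk y).
Proof. by rewrite Hmod. Qed.

Lemma lePN x y : Defs.leP lt x y = leN (cl x) (rk x) (cl y) (rk y).
Proof.
rewrite /Defs.leP /leN HmodN; congr (_ || _).
apply/eqP/andP => [->|[/eqP e1 /eqP e2]]; first by rewrite !eqxx.
by apply: Hinj => //; apply/val_inj.
Qed.

Lemma rk_lt x y : lt x y -> rk x < rk y.
Proof. rewrite HmodN /ltN => /orP[|/andP[/eqP -> _]]; lia. Qed.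

Definition psi (a : 'I_3) (k : nat) : T := odflt d [pick x | (rk x == k) && (cl x == a)].

Lemma psi_spec a k : k <= n -> rk (psi a k) = k /\ cl (psi a k) = a.
Proof.
move=> kn; rewrite /psi; case: pickP => [x /andP[/eqP -> /eqP ->] //|H].
case: (Hsur a kn) => x [rx cx]; move: (H x); by rewrite rx cx !eqxx.
Qed.

Lemma psi_eta x : psi (cl x) (rk x) = x.
Proof. by case: (psi_spec (cl x) (Hb x)) => r c; apply: Hinj. Qed.

Definition rotf (x : T) : T := psi (ordS (cl x)) (rk x).

Lemma ordS_inj : injective (@ordS 3).
Proof. by move=> a b e; rewrite -(ordS3 a) -(ordS3 b) e. Qed.

Lemma model_automorphic : automorphic lt.
Proof.
exists rotf; have rs x := psi_spec (ordS (cl x)) (Hb x).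
split; first by move=> x _; rewrite inE.
split.
  move=> x y _ _ e; have [r1 c1] := rs x; have [r2 c2] := rs y.
  rewrite /rotf in e; apply: Hinj.
    by rewrite -r1 -r2 /rotf e.
  by apply: ordS_inj; rewrite -c1 -c2 /rotf e.
split.
  move=> y _; exists (psi (ordS (ordS (cl y))) (rk y)); first by rewrite inE.
  have [r1 c1] := psi_spec (ordS (ordS (cl y))) (Hb y).
  by rewrite /rotf r1 c1 ordS3 psi_eta.
split.
  move=> x y _ _; have [r1 c1] := rs x; have [r2 c2] := rs y.
  rewrite !Hmod /rotf r1 r2 c1 c2 /ltM /=.
  by rewrite (inj_eq ordS_inj).
move=> x _; apply/eqP => e; have [r1 c1] := rs x.
by move: (ordS_neq (cl x)); rewrite -c1 -/(rotf x) e eqxx.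
Qed.

Variable h : T -> T.
Hypothesis Hh : forall x y, Defs.leP lt x y -> Defs.leP lt (h x) (h y).
Hypothesis Hfp : forall x, h x != x.

Lemma h_up x : ~~ lt x (h x).
Proof.
apply/negP => l.
have H m : lt (iter m h x) (iter m.+1 h x) /\ rk x + m <= rk (iter m h x).
  elim: m => [|m [IH1 IH2]]; first by rewrite addn0.
  split; last by have := rk_lt IH1; rewrite /=; lia.
  have : Defs.leP lt (iter m.+1 h x) (iter m.+2 h x) by apply: Hh; rewrite /Defs.leP IH1 orbT.
  by rewrite /Defs.leP /= eq_sym (negbTE (Hfp _)).
case: (H n.+1) => _; have := Hb (iter n.+1 h x); lia.
Qed.

Lemma h_down x : ~~ lt (h x) x.
Proof.
apply/negP => l.
have H m : lt (iter m.+1 h x) (iter m h x) /\ rk (iter m h x) + m <= rk x.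
  elim: m => [|m [IH1 IH2]]; first by rewrite addn0.
  split; last by have := rk_lt IH1; rewrite /=; lia.
  have : Defs.leP lt (iter m.+2 h x) (iter m.+1 h x) by apply: Hh; rewrite /Defs.leP IH1 orbT.
  by rewrite /Defs.leP /= (negbTE (Hfp _)).
case: (H n.+1) => _; have := Hb x; lia.
Qed.

Definition cd (x : T) : nat :=
  if rk (h x) == rk x then nat_of_ord (cl (h x)) else if rk (h x) == (rk x).+1 then 3 else 4.

Lemma cd_spec x : [/\ nat_of_ord (cl (h x)) = imgc (cd x) (cl x),
   rk (h x) + 1 = rk x + imgo (cd x), cd x < 5 & (cd x < 3 -> cd x != cl x)].
Proof.
have u := h_up x; have w := h_down x; move: u w; rewrite !HmodN /ltN.
rewrite /cd /imgc /imgo.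
case: (eqVneq (rk (h x)) (rk x)) => e1.
  move=> _ _; rewrite ltn_ord; split => //; first by lia.
    by have := ltn_ord (cl (h x)); lia.
  move=> _; apply/negP => /eqP e; move: (Hfp x); rewrite (Hinj e1) ?eqxx //.
  exact/val_inj.
case: (eqVneq (rk (h x)) (rk x).+1) => e2 /=.
  move=> u _; split => //; last by lia.
  by move: u; rewrite negb_or => /andP[_]; rewrite /= negbK => /eqP ->.
move=> u w.
have e3 : rk (h x) + 1 = rk x by move: u w; rewrite !negb_or; lia.
split => //; last by lia.
move: w; rewrite -e3 addn1 eqxx /= negb_or => /andP[_]; by rewrite negbK => /eqP ->.
Qed.

Definition psiN (a k : nat) : T := psi (inord a) k.
Definition st (k : nat) : seq nat := [:: cd (psiN 0 k); cd (psiN 1 k); cd (psiN 2 k)].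

Lemma nth_st k a : a < 3 -> nth 0 (st k) a = cd (psiN a k).
Proof. by case: a => [|[|[|]]]. Qed.

Lemma psiN_spec a k : a < 3 -> k <= n -> rk (psiN a k) = k /\ nat_of_ord (cl (psiN a k)) = a.
Proof.
move=> a3 kn; case: (psi_spec (inord a) kn) => r c; split => //.
by rewrite c inordK.
Qed.

Lemma st_valid k : k <= n -> valid (st k).
Proof.
move=> kn; apply/andP; split => //; apply/allP => a; rewrite mem_iota => /andP[_ a3].
rewrite nth_st //; case: (cd_spec (psiN a k)) => _ _ c5 c3.
case: (psiN_spec a3 kn) => _ ca; rewrite c5 /=; rewrite ca in c3.
case: (ltnP (cd (psiN a k)) 3) => h3; first exact: c3.
by apply/eqP => e; move: h3; rewrite e; lia.
Qed.

Lemma st_compat k : k < n -> compat (st k) (st k.+1).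
Proof.
move=> kn; apply/allP => a; rewrite mem_iota => /andP[_ a3].
apply/allP => b; rewrite mem_iota => /andP[_ b3]; apply/implyP => ab.
rewrite !nth_st //.
set x := psiN a k; set y := psiN b k.+1.
case: (psiN_spec a3 (ltnW kn)) => rx cx.
case: (psiN_spec b3 kn) => ry cy.
have lxy : Defs.leP lt x y by rewrite /Defs.leP HmodN rx ry cx cy /ltN eqxx ab /= !orbT.
have := Hh lxy; rewrite lePN.
case: (cd_spec x) => c1 r1 _ _; case: (cd_spec y) => c2 r2 _ _.
rewrite c1 c2 cx cy -(leN_shift _ _ _ _ 1) r1 r2 rx ry.
by rewrite addSn (addnC k) (addnC k) -addSn leN_shift.
Qed.

Lemma st_noD : noD (st 0).
Proof.
apply/allP => a; rewrite mem_iota => /andP[_ a3]; rewrite nth_st //.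
case: (psiN_spec a3 (leq0n n)) => rx _.
case: (cd_spec (psiN a 0)) => _ r _ _; apply/eqP => e; move: r; rewrite e rx /imgo /=; lia.
Qed.

Lemma st_noU : noU (st n).
Proof.
apply/allP => a; rewrite mem_iota => /andP[_ a3]; rewrite nth_st //.
case: (psiN_spec a3 (leqnn n)) => rx _.
case: (cd_spec (psiN a n)) => _ r _ _; apply/eqP => e; move: r; rewrite e rx /imgo /=.
have := Hb (h (psiN a n)); lia.
Qed.

Lemma st_F k : k <= n -> st k \in Fl (k %% 3).
Proof.
elim: k => [|k IH] kn; first by apply: F0_init; [apply: st_valid | apply: st_noD].
have := F_step (ltn_pmod k (isT : 0 < 3)) (IH (ltnW kn)) (st_valid kn) (st_compat kn).
by have -> : (k %% 3).+1 %% 3 = k.+1 %% 3 by lia.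
Qed.

Lemma st_B m : m <= n -> st (n - m) \in Bl (m %% 3).
Proof.
elim: m => [|m IH] mn; first by rewrite subn0; apply: B0_init; [apply: st_valid | apply: st_noU].
have e : n - m = (n - m.+1).+1 by lia.
have hc : compat (st (n - m.+1)) (st (n - m)) by rewrite e; apply: st_compat; lia.
have := B_step (ltn_pmod m (isT : 0 < 3)) (IH (ltnW mn)) (st_valid (leq_subr m.+1 n)) hc.
by have -> : (m %% 3).+1 %% 3 = m.+1 %% 3 by lia.
Qed.

Lemma h_surj : ~~ (3 %| n) -> forall y, exists x, h x = y.
Proof.
move=> n3 y; set k := rk y; have kn : k <= n := Hb y.
have hF := st_F kn; have hB := st_B (leq_subr k n).
rewrite subKn // in hB.
have rs : rotS (st k).
  apply: (FB_rot _ _ _ hF hB); rewrite ?ltn_pmod //.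
  move: n3; rewrite /dvdn; lia.
case: (rot_surj rs (ltn_ord (cl y))) => a a3; rewrite nth_st // => e.
exists (psiN a k); case: (psiN_spec a3 kn) => rx cx.
case: (cd_spec (psiN a k)) => c1 r1 _ _.
move: c1 r1; rewrite e /imgc /imgo ltn_ord => c1 r1.
apply: Hinj; first by rewrite rx in r1; lia.
exact/val_inj.
Qed.

End Model.

Definition off (a m : nat) : nat :=
  match m, a with
  | 1, 0 => 2 | 1, 1 => 0 | 2, 0 => 0 | 2, 1 => 2 | _, _ => 1 end.
Definition rc (a m : nat) : nat :=
  match m, a with
  | 0, 2 => 0 | 0, _ => a | _, 1 => 0 | _, _ => 2 end.
Definition inQ (a k : nat) : bool := if k %% 3 == 0 then a != 2 else a == 2.
Definition tix (k : nat) : nat := 2 * (k %/ 3) + (k %% 3 != 0).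
Definition bv (a k : nat) : bool := if k %% 3 == 0 then a == 1 else k %% 3 == 2.

Lemma retr_mono a b k l : a < 3 -> b < 3 -> leN a k b l ->
  leN (rc a (k %% 3)) (k + off a (k %% 3)) (rc b (l %% 3)) (l + off b (l %% 3)).
Proof.
case: a => [|[|[|]]] // _; case: b => [|[|[|]]] // _;
case hk: (k %% 3) => [|[|[|m]]]; case hl: (l %% 3) => [|[|[|m']]];
rewrite /leN /ltN /=; lia.
Qed.

Lemma retr_inQ a k : a < 3 -> inQ (rc a (k %% 3)) (k + off a (k %% 3)).-1.
Proof.
case: a => [|[|[|]]] // _; case hk: (k %% 3) => [|[|[|m]]]; rewrite /inQ /=;
case: ((k + _).-1 %% 3 =P 0) => h /=; lia.
Qed.

Lemma retr_id a k : a < 3 -> inQ a k -> rc a (k %% 3) = a /\ (k + off a (k %% 3)).-1 = k.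
Proof.
case: a => [|[|[|]]] // _; case hk: (k %% 3) => [|[|[|m]]]; rewrite /inQ /= hk //=; lia.
Qed.

Lemma retr_bound a k n : a < 3 -> 3 %| n -> k <= n -> (k + off a (k %% 3)).-1 <= n.
Proof.
case: a => [|[|[|]]] // _; case hk: (k %% 3) => [|[|[|m]]]; rewrite /=; lia.
Qed.

Lemma retr_pos a k : a < 3 -> 0 < k + off a (k %% 3).
Proof.
case: a => [|[|[|]]] // _; case hk: (k %% 3) => [|[|[|m]]]; rewrite /=; lia.
Qed.

Lemma tow_lt a b k l : a < 3 -> b < 3 -> inQ a k -> inQ b l ->
  ltN a k b l = (tix k < tix l).
Proof.
case: a => [|[|[|]]] // _; case: b => [|[|[|]]] // _;
rewrite /inQ /ltN /tix; case: (k %% 3 =P 0) => h1; case: (l %% 3 =P 0) => h2 /=;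
move=> ? ?; apply/idP/idP; lia.
Qed.

Lemma tow_inj a b k l : a < 3 -> b < 3 -> inQ a k -> inQ b l ->
  tix k = tix l -> bv a k = bv b l -> a = b /\ k = l.
Proof.
case: a => [|[|[|]]] // _; case: b => [|[|[|]]] // _;
rewrite /inQ /tix /bv; case: (k %% 3 =P 0) => h1; case: (l %% 3 =P 0) => h2 /=;
case: (k %% 3 =P 2) => h3; case: (l %% 3 =P 2) => h4 //=; lia.
Qed.

Lemma tow_surj i (b : bool) n : 3 %| n -> i < (2 * (n %/ 3)).+1 ->
  exists a k, [/\ a < 3, k <= n, inQ a k, tix k = i & bv a k = b].
Proof.
move=> n3 iK.
exists (if i %% 2 == 0 then (if b then 1 else 0) else 2).
exists (if i %% 2 == 0 then 3 * (i %/ 2) else 3 * (i %/ 2) + (if b then 2 else 1)).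
rewrite /inQ /tix /bv.
case: b; case: (i %% 2 =P 0) => h /=;
repeat (case: ifP => /eqP ?); split; lia.
Qed.

Lemma rc_lt a m : a < 3 -> rc a m < 3.
Proof. by case: m => [|[|[|m]]]; case: a => [|[|[|]]]. Qed.

Lemma leN_pred a i b j : 0 < i -> 0 < j -> leN a i.-1 b j.-1 = leN a i b j.
Proof. by move=> hi hj; rewrite -(leN_shift _ _ _ _ 1) !addn1 !prednK. Qed.

Section Retract.
Set Default Proof Using "All".
Variables (T : finType) (lt : rel T) (n : nat) (cl : T -> 'I_3) (rk : T -> nat).
Hypothesis Hb : forall x, rk x <= n.
Hypothesis Hinj : forall x y, rk x = rk y -> cl x = cl y -> x = y.
Hypothesis Hsur : forall (a : 'I_3) k, k <= n -> exists x, rk x = k /\ cl x = a.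
Hypothesis Hmod : forall x y, lt x y = ltM (cl x, rk x) (cl y, rk y).
Variable d : T.
Hypothesis H3 : 3 %| n.

Let ps := psi cl rk d.
Let pspec := psi_spec Hb Hinj Hsur Hmod d.

Definition R (x : T) : T :=
  ps (inord (rc (cl x) (rk x %% 3))) (rk x + off (cl x) (rk x %% 3)).-1.

Lemma R_spec x : rk (R x) = (rk x + off (cl x) (rk x %% 3)).-1 /\
                 nat_of_ord (cl (R x)) = rc (cl x) (rk x %% 3).
Proof.
have := pspec (inord (rc (cl x) (rk x %% 3))) (retr_bound (ltn_ord (cl x)) H3 (Hb x)).
by case => -> ->; rewrite inordK // rc_lt.
Qed.

Definition Qs : {set T} := [set x | inQ (cl x) (rk x)].

Lemma Q_retract : is_retract lt Qs.
Proof.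
exists R; split; [|split].
- move=> x y; rewrite !(lePN Hb Hinj Hsur Hmod d).
  case: (R_spec x) => r1 c1; case: (R_spec y) => r2 c2.
  rewrite r1 r2 c1 c2 leN_pred ?retr_pos //.
  exact: retr_mono.
- move=> x; rewrite inE; case: (R_spec x) => -> ->; exact: retr_inQ.
- move=> q; rewrite inE => hq; case: (R_spec q) => r1 c1.
  case: (retr_id (ltn_ord (cl q)) hq) => e1 e2.
  apply: Hinj; first by rewrite r1 e2.
  by apply/val_inj; rewrite /= c1 e1.
Qed.

Lemma Q_proper : Qs != [set: T].
Proof.
apply/negP => /eqP e.
have := pspec (inord 2) (leq0n n) => -[r c].
have : ps (inord 2) 0 \in Qs by rewrite e inE.
by rewrite inE r c inordK.
Qed.

Definition KK := (2 * (n %/ 3)).+1.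
Definition SS := fun _ : 'I_KK => (bool : finType).
Definition lts := fun i : 'I_KK => (fun _ _ : SS i => false).

Definition FF (x : T) : {i : 'I_KK & SS i} :=
  existT SS (inord (tix (rk x))) (bv (cl x) (rk x)).

Lemma tix_bound k : k <= n -> tix k < KK.
Proof. rewrite /KK /tix; lia. Qed.

Lemma Q_tower : iso_tower_of_sections lt Qs.
Proof.
exists KK; split; first by [].
exists SS, lts; split.
  move=> i; split; first by split.
  by left; split; first by rewrite card_bool.
exists FF; split; [|split].
- move=> x y; rewrite !inE => hx hy e.
  have e1 : tix (rk x) = tix (rk y).
    have := congr1 (fun s => nat_of_ord (tag s)) e; rewrite /= !inordK //; exact: tix_bound.
  have e2 : bv (cl x) (rk x) = bv (cl y) (rk y) by exact: (congr1 (fun s : {i : 'I_KK & SS i} => (tagged s : bool)) e).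
  case: (tow_inj (ltn_ord _) (ltn_ord _) hx hy e1 e2) => c r.
  by apply: Hinj => //; apply/val_inj.
- case=> i b.
  case: (tow_surj b H3 (ltn_ord i)) => a [k [a3 kn q t bb]].
  case: (pspec (inord a) kn) => r c.
  exists (ps (inord a) k); first by rewrite inE r c inordK.
  rewrite /FF r c inordK // t bb; congr existT; apply/val_inj; rewrite /= inordK //.
- move=> x y; rewrite !inE => hx hy.
  rewrite (HmodN Hb Hinj Hsur Hmod d) /ordsum_lt /lts andbF orbF /=.
  rewrite !inordK ?tix_bound //; exact: tow_lt.
Qed.

End Retract.

Definition autF (S : finType) (lt : rel S) (g : S -> S) :=
  [/\ injective g, forall y, exists x, g x = y, forall x y, lt x y = lt (g x) (g y)
   & forall x, g x != x].

Lemma section_aut (S : finType) (lt : rel S) : is_section lt -> exists g, autF lt g.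
Proof.
case=> _ [[c2 na]|[m [_ [g [gb [_ [_ [g3 _]]]]]]]].
  have : 1 < #|S| by rewrite c2.
  case/card_gt1P => x [y [_ _ xy]].
  have all2 z : (z == x) || (z == y).
    have e : [set x; y] = [set: S].
      by apply/eqP; rewrite eqEcard subsetT /= cardsT c2 cards2 xy.
    have : z \in [set: S] by rewrite inE.
    by rewrite -e !inE.
  exists (fun z => if z == x then y else x); split.
  - move=> z w; case: (eqVneq z x) => [->|zx]; case: (eqVneq w x) => [->|wx] //.
    + by move=> e; move: xy; rewrite e eqxx.
    + by move=> e; move: xy; rewrite e eqxx.
    + move=> _; move: (all2 z) (all2 w); rewrite (negbTE zx) (negbTE wx) /=.
      by move=> /eqP -> /eqP ->.
  - move=> w; case: (eqVneq w x) => [->|wx]; first by exists y; rewrite eq_sym (negbTE xy).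
    exists x; rewrite eqxx; move: (all2 w); rewrite (negbTE wx) /=.
    by move/eqP.
  - by move=> z w; rewrite (negbTE (na _ _)) (negbTE (na _ _)).
  - move=> z; case: (eqVneq z x) => [->|zx]; first by rewrite eq_sym.
    by rewrite eq_sym.
case: gb => g' gK g'K.
pose rt (z : S) := g (ordS (g' z).1, (g' z).2).
have rtE i k : rt (g (i, k)) = g (ordS i, k) by rewrite /rt gK.
have ordS_inj : injective (@ordS 3) by move=> a b e; rewrite -(ordS3 a) -(ordS3 b) e.
exists rt; split.
- move=> z w; rewrite -(g'K z) -(g'K w).
  case: (g' z) => i k; case: (g' w) => j l; rewrite !rtE => /(can_inj gK) e.
  have e1 : ordS i = ordS j := congr1 fst e; have e2 : k = l := congr1 snd e.
  by rewrite (ordS_inj _ _ e1) e2.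
- move=> w; rewrite -(g'K w); case: (g' w) => j l.
  by exists (g (ordS (ordS j), l)); rewrite rtE ordS3.
- move=> z w; rewrite -(g'K z) -(g'K w).
  case: (g' z) => i k; case: (g' w) => j l; rewrite !rtE.
  apply/idP/idP; first exact: g3.
  by move=> h; have := g3 _ _ _ _ (g3 _ _ _ _ h); rewrite !ordS3.
- move=> z; rewrite -(g'K z); case: (g' z) => i k; rewrite rtE.
  apply/negP => /eqP /(can_inj gK) e.
  have e1 : ordS i = i := congr1 fst e.
  by move: (ordS_neq i); rewrite e1 eqxx.
Qed.

Section OrdSum.
Local Unset Implicit Arguments.
Variables (k : nat) (S : 'I_k -> finType) (lts : forall i, rel (S i)).
Hypothesis Hsec : forall i : 'I_k, is_section (lts i).

Definition gsec (i : 'I_k) : S i -> S i :=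
  proj1_sig (constructive_indefinite_description _ (section_aut (Hsec i))).
Lemma gsecP (i : 'I_k) : autF (lts i) (gsec i).
Proof. exact: (proj2_sig (constructive_indefinite_description _ (section_aut (Hsec i)))). Qed.

Definition sig_ (s : {i : 'I_k & S i}) : {i : 'I_k & S i} :=
  existT S (tag s) (gsec (tag s) (tagged s)).

Lemma existT_inj (i : 'I_k) (a b : S i) : existT S i a = existT S i b -> a = b.
Proof. move/eqP; rewrite eq_Tagged /=; by move/eqP. Qed.

Lemma sig_inj : injective sig_.
Proof.
case=> i a [j b] e; have ij : i = j by move: (congr1 (fun s => tag s) e).
subst j; move/existT_inj: e; case: (gsecP i) => gi _ _ _ /gi /= -> //.
Qed.

Lemma sig_surj y : exists x, sig_ x = y.
Proof.
case: y => i b; case: (gsecP i) => _ gs _ _; case: (gs b) => a <-.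
by exists (existT S i a).
Qed.

Lemma sig_fp x : sig_ x != x.
Proof.
case: x => i a; apply/negP => /eqP /existT_inj; case: (gsecP i) => _ _ _ gf e.
by move: (gf a); rewrite e eqxx.
Qed.

Lemma sig_lt a b : ordsum_lt lts (sig_ a) (sig_ b) = ordsum_lt lts a b.
Proof.
case: a => i x; case: b => j y; rewrite /ordsum_lt /=; congr (_ || _).
case: (eqVneq j i) => [e|ne]; last by [].
subst j; rewrite /= !tagged_asE; case: (gsecP i) => _ _ gl _; by rewrite [RHS]gl.
Qed.

End OrdSum.

Lemma tower_automorphic (T : finType) (lt : rel T) (A : {set T}) :
  iso_tower_of_sections lt A -> automorphic_on lt A.
Proof.
case=> k [_ [S [lts [Hsec [F [Fi [Fs Fl]]]]]]].
pose s := sig_ _ _ _ Hsec.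
pose f x := odflt x [pick y in A | F y == s (F x)].
have fP x : f x \in A /\ F (f x) = s (F x).
  rewrite /f; case: pickP => [y /andP[yA /eqP e] //|H].
  case: (Fs (s (F x))) => y yA e; move: (H y); by rewrite yA e eqxx.
exists f; split; [|split; [|split; [|split]]].
- by move=> x _; case: (fP x).
- move=> x y xA yA e; apply: Fi => //; apply: (sig_inj _ _ _ Hsec).
  have := congr1 F e; case: (fP x) => _ ->; case: (fP y) => _ ->; by [].
- move=> y yA; case: (sig_surj _ _ _ Hsec (F y)) => t et.
  case: (Fs t) => x xA ex; exists x => //.
  case: (fP x) => fA fe; apply: Fi => //; by rewrite fe ex.
- move=> x y xA yA; case: (fP x) => fxA fxe; case: (fP y) => fyA fye.
  by rewrite Fl // Fl // fxe fye sig_lt.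
- move=> x xA; apply/negP => /eqP e; case: (fP x) => _; rewrite e => h.
  by move: (sig_fp _ _ _ Hsec (F x)); rewrite -/s -h eqxx.
Qed.

Lemma no_aut_retract (T : finType) (lt : rel T) (n : nat) (cl : T -> 'I_3) (rk : T -> nat)
  (Hb : forall x, rk x <= n)
  (Hinj : forall x y, rk x = rk y -> cl x = cl y -> x = y)
  (Hsur : forall (a : 'I_3) k, k <= n -> exists x, rk x = k /\ cl x = a)
  (Hmod : forall x y, lt x y = ltM (cl x, rk x) (cl y, rk y)) (d : T)
  (Q : {set T}) : Q != [set: T] -> is_retract lt Q -> automorphic_on lt Q -> 3 %| n.
Proof.
move=> QT [r [rm [rQ rid]]] [g [gQ [gi [gs [gl gf]]]]].
apply/negPn/negP => n3.
pose h x := g (r x).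
have Hh : forall x y, Defs.leP lt x y -> Defs.leP lt (h x) (h y).
  move=> x y /rm; rewrite /Defs.leP /h; case/orP => [/eqP ->|l]; first by rewrite eqxx.
  by rewrite -gl ?l ?orbT.
have Hfp : forall x, h x != x.
  move=> x; apply/negP => /eqP e.
  have xQ : x \in Q by rewrite -e /h gQ.
  by move: (gf x xQ); rewrite -{2}e /h rid ?eqxx.
have := h_surj Hb Hinj Hsur Hmod d Hh Hfp n3.
move=> hs; move/negP: QT; apply; apply/eqP/setP => y; rewrite inE.
by case: (hs y) => x <-; rewrite /h gQ.
Qed.

Theorem proposition5p11 (T : finType) (lt : rel T) (n : nat) :
  is_spo lt -> six_stack lt n ->
  ((exists Q : {set T}, Q != [set: T] /\ is_retract lt Q /\
                        iso_tower_of_sections lt Q) <-> (3 %| n))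
  /\ (minimal_automorphic lt <-> ~~ (3 %| n)).
Proof.
move=> [Hirr Htr] [Hran [Hn Hsl]].
have Hrk := rank_le_n Hirr Htr Hran.
have := Hsl 0 Hn; rewrite /iso_on => -[f0 [Hf0i [Hf0s Hf0l]]].
have Hinj := col_inj Hirr Htr Hrk Hsl Hf0i Hf0s Hf0l.
have Hsur := col_surj Hirr Htr Hrk Hsl Hf0i Hf0s Hf0l.
have Hmod := lt_model Hirr Htr Hrk Hsl Hf0i Hf0s Hf0l.
case: (Hf0s (ord0, false)) => d _ _.
have K2 : 3 %| n -> exists Q : {set T}, [/\ Q != [set: T], is_retract lt Q & iso_tower_of_sections lt Q].
  move=> H3; exists (Qs (col lt f0) (rank lt)); split.
  - exact: (Q_proper Hrk Hinj Hsur Hmod d).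
  - exact: (Q_retract Hrk Hinj Hsur Hmod d H3).
  - exact: (Q_tower Hrk Hinj Hsur Hmod d H3).
have K3 := no_aut_retract Hrk Hinj Hsur Hmod d.
split; split.
- case=> Q [QT [QR QS]]; apply: (K3 Q QT QR); exact: tower_automorphic.
- by move/K2 => [Q [? ? ?]]; exists Q.
- case=> _ Hmin; apply/negP => /K2 [Q [QT QR QS]].
  exact: (Hmin Q QT QR (tower_automorphic QS)).
- move=> n3; split; first exact: (model_automorphic Hrk Hinj Hsur Hmod d).
  move=> Q QT QR QA; move: n3; by rewrite (K3 Q QT QR QA).
Qed.
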